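(* Let $0=t_0<\dots<t_N=T$, $\tau_k=t_k-t_{k-1}$, $r_k=\tau_k/\tau_{k-1}$ ($2\le k\le N$). Let $r_{\max}\approx4.8645$ be the positive root of $x^3=(2x+1)^2$, fix $\delta\in(0,r_{\max})$ and assume $r_2>0$ and $0<r_k\le r_{\max}-\delta$ for $3\le k\le N$. Then the DOC kernels $\theta^{(n)}_{n-k}$ ($n\ge2$) are positive definite; more precisely, for any real sequence $\{\omega_j\}_{j=1}^n$ and $2\le n\le N$, $$2\sum_{k=2}^n\omega_k\sum_{j=2}^k\theta^{(k)}_{k-j}\omega_j\ge C_r\delta\sum_{k=2}^n\tau_k^{-1}\Big(\sum_{j=2}^k\theta^{(k)}_{k-j}\omega_j\Big)^2,$$ where $C_r=\sqrt{r_{\max}}/(1+r_{\max})^2$.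
   Context: BDF2 kernels: $b^{(1)}_0=1/\tau_1$; for $n\ge2$, $b^{(n)}_0=\frac{1+2r_n}{\tau_n(1+r_n)}$, $b^{(n)}_1=-\frac{r_n^2}{\tau_n(1+r_n)}$, $b^{(n)}_j=0$ for $2\le j\le n-1$. The discrete orthogonal convolution (DOC) kernels $\theta^{(n)}_{n-j}$ ($1\le j\le n$) are defined by $\sum_{j=k}^n\theta^{(n)}_{n-j}b^{(j)}_{j-k}=\delta_{nk}$ (Kronecker delta) for all $1\le k\le n$. *)

(* Defs.v *)
From mathcomp Require Import all_boot all_order all_algebra.
From mathcomp Require Import reals.
Set Implicit Arguments. Unset Strict Implicit. Unset Printing Implicit Defensive.
Import Order.TTheory GRing.Theory Num.Theory.
Local Open Scope ring_scope.

Definition dstep {R : realType} (t : nat -> R) (k : nat) : R := t k - t k.-1.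

Definition step_ratio {R : realType} (t : nat -> R) (k : nat) : R :=
  dstep t k / dstep t k.-1.

(* BDF2 kernels b^{(n)}_i  (b^{(n)}_j = 0 for j >= 2; b^{(1)}_j, j>=1, is
   never used and set to 0) *)
Definition bdf2 {R : realType} (t : nat -> R) (n i : nat) : R :=
  if n == 1%N then (if i == 0%N then (dstep t 1)^-1 else 0)
  else if i == 0%N then (1 + 2 * step_ratio t n) / (dstep t n * (1 + step_ratio t n))
  else if i == 1%N then - (step_ratio t n ^+ 2) / (dstep t n * (1 + step_ratio t n))
  else 0.

Definition Cr {R : realType} (rmax : R) : R := Num.sqrt rmax / (1 + rmax) ^+ 2.

(* Main.v *)
Require Import Defs.
From mathcomp Require Import all_boot all_order all_algebra.
From mathcomp Require Import reals.
Import Order.TTheory GRing.Theory Num.Theory.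
From mathcomp Require Import ring lra zify.
Local Open Scope ring_scope.

Lemma P_nonneg (R : realType) (s r : R) : 0 < s -> s ^+ 3 = 2 * s ^+ 2 + 1 ->
  0 <= r -> r <= s ^+ 2 ->
  0 <= s * (1 + s ^+ 2) * (2 + 4 * r) - r ^+ 2 * (1 + s ^+ 2) - s ^+ 4 * (1 + r).
Proof.
move=> s0 hs r0 rs.
have e : s * (s * (1 + s ^+ 2) * (2 + 4 * r) - r ^+ 2 * (1 + s ^+ 2) - s ^+ 4 * (1 + r))
   = (s ^+ 2 - r) * (s * (1 + s ^+ 2) * r + 1) - (s ^+ 3 - 2 * s ^+ 2 - 1) * (s ^+ 2 + r * (2 * s ^+ 2 + 1)) by ring.
have h0 : s ^+ 3 - 2 * s ^+ 2 - 1 = 0 by rewrite hs; ring.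
rewrite h0 mul0r subr0 in e.
have : 0 <= s * (s * (1 + s ^+ 2) * (2 + 4 * r) - r ^+ 2 * (1 + s ^+ 2) - s ^+ 4 * (1 + r)).
  rewrite e; apply: mulr_ge0; first by lra.
  apply: addr_ge0 => //; apply: mulr_ge0 => //; apply: mulr_ge0; [exact: ltW| ]. 
  by apply: addr_ge0 => //; apply: sqr_ge0.
by rewrite pmulr_rge0.
Qed.

Lemma stepineq (R : realType) (s d r tau' v v' : R) :
  0 < s -> s ^+ 3 = 2 * s ^+ 2 + 1 -> 0 < d -> 0 < r -> r <= s ^+ 2 - d -> 0 < tau' ->
  s ^+ 3 / (1 + s ^+ 2) * v ^+ 2 / (r * tau')
  - (s ^+ 3 / (1 + s ^+ 2) - s / (1 + s ^+ 2) ^+ 2 * d) * v' ^+ 2 / tau'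
  <= 2 * ((1 + 2 * r) / ((r * tau') * (1 + r)) * v
          + - (r ^+ 2) / ((r * tau') * (1 + r)) * v') * v.
Proof.
move=> s0 hs d0 r0 rs t0.
pose i := (1 + s ^+ 2)^-1.
pose P := s * (1 + s ^+ 2) * (2 + 4 * r) - r ^+ 2 * (1 + s ^+ 2) - s ^+ 4 * (1 + r).
have s2 : 0 < 1 + s ^+ 2 by rewrite ltr_wpDr ?sqr_ge0.
have e : 2 * ((1 + 2 * r) / ((r * tau') * (1 + r)) * v
          + - (r ^+ 2) / ((r * tau') * (1 + r)) * v') * v
   - (s ^+ 3 / (1 + s ^+ 2) * v ^+ 2 / (r * tau')
  - (s ^+ 3 / (1 + s ^+ 2) - s / (1 + s ^+ 2) ^+ 2 * d) * v' ^+ 2 / tau')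
  = (P * i * v ^+ 2 + r ^+ 2 * (v - s * v') ^+ 2
     + s * r * (i * s * (s ^+ 2 - r - d * i * (1 + r))) * v' ^+ 2)
    / (s * (r * tau') * (1 + r)).
  rewrite /P /i; field.
  have r1 : 0 < 1 + r by lra.
  by rewrite (gt_eqF t0) (gt_eqF r0) (gt_eqF s0) (gt_eqF s2) (gt_eqF r1).
rewrite -subr_ge0 e; apply: divr_ge0; last first.
  have r1 : 0 < 1 + r by lra.
  apply/ltW; apply: mulr_gt0 => //; apply: mulr_gt0 => //; exact: mulr_gt0.
have i0 : 0 < i by rewrite invr_gt0.
have Pge : 0 <= P by apply: P_nonneg => //; [exact: ltW | lra].
have ir : i * (1 + r) <= 1.
  by rewrite /i mulrC -ler_pdivlMr // ?mul1r ?div1r ?invrK; lra.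
have k : 0 <= s ^+ 2 - r - d * i * (1 + r).
  have : d * (i * (1 + r)) <= d by rewrite ler_piMr // ltW.
  by rewrite mulrA; lra.
apply: addr_ge0; first apply: addr_ge0.
- apply: mulr_ge0; [apply: mulr_ge0 => //; exact: ltW | exact: sqr_ge0].
- apply: mulr_ge0; exact: sqr_ge0.
- apply: mulr_ge0; last exact: sqr_ge0.
  apply: mulr_ge0; first by apply: mulr_ge0; exact: ltW.
  apply: mulr_ge0 => //; apply: mulr_ge0; exact: ltW.
Qed.

Lemma baseineq (R : realType) (s r tau v : R) :
  0 < s -> s ^+ 3 = 2 * s ^+ 2 + 1 -> 0 < r -> 0 < tau ->
  s ^+ 3 / (1 + s ^+ 2) * v ^+ 2 / tau <= 2 * ((1 + 2 * r) / (tau * (1 + r)) * v) * v.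
Proof.
move=> s0 hs r0 t0.
have s2 : 0 < 1 + s ^+ 2 by rewrite ltr_wpDr ?sqr_ge0.
have r1 : 0 < 1 + r by lra.
have e : 2 * ((1 + 2 * r) / (tau * (1 + r)) * v) * v - s ^+ 3 / (1 + s ^+ 2) * v ^+ 2 / tau
  = (2 * (1 + 2 * r) * (1 + s ^+ 2) - s ^+ 3 * (1 + r)) * v ^+ 2 / (tau * (1 + r) * (1 + s ^+ 2)).
  by field; rewrite (gt_eqF t0) (gt_eqF s2) (gt_eqF r1).
rewrite -subr_ge0 e hs; apply: divr_ge0.
  apply: mulr_ge0; last exact: sqr_ge0.
  have : 0 <= r * s ^+ 2 by apply: mulr_ge0; [exact: ltW| exact: sqr_ge0].
  lra.
apply/ltW; apply: mulr_gt0 => //; exact: mulr_gt0.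
Qed.

Lemma solve_lin {R : fieldType} {x a y : R} : a != 0 -> x * a + y = 0 -> x = - y / a.
Proof. by move=> a0 /eqP; rewrite addr_eq0 => /eqP <-; rewrite mulfK. Qed.

Lemma solve_one {R : fieldType} {z c : R} : c != 0 -> z * c = 1 -> z = c^-1.
Proof. by move=> c0 h; rewrite -[z]mulr1 -(divff c0) mulrA h mul1r. Qed.

Lemma sroot (R : realType) (s : R) : 0 < s -> (s ^+ 2) ^+ 3 = (2 * s ^+ 2 + 1) ^+ 2 ->
  s ^+ 3 = 2 * s ^+ 2 + 1.
Proof.
move=> s0 h.
have : (s ^+ 3 - (2 * s ^+ 2 + 1)) * (s ^+ 3 + (2 * s ^+ 2 + 1)) = 0.
  have -> : (s ^+ 3 - (2 * s ^+ 2 + 1)) * (s ^+ 3 + (2 * s ^+ 2 + 1))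
     = (s ^+ 2) ^+ 3 - (2 * s ^+ 2 + 1) ^+ 2 by ring.
  by rewrite h subrr.
move/eqP; rewrite mulf_eq0 => /orP [|/eqP h2]; first by rewrite subr_eq0 => /eqP.
 have : 0 < s ^+ 3 + (2 * s ^+ 2 + 1).
  have := exprn_gt0 3 s0; have := sqr_ge0 s; lra.
by rewrite h2 ltxx.
Qed.

Theorem mainTheorem5 (R : realType) (N : nat) (T : R) (t : nat -> R)
  (rmax delta : R) (theta : nat -> nat -> R)
  (ht0 : t 0%N = 0) (htN : t N = T)
  (ht : forall k : nat, (1 <= k <= N)%N -> t k.-1 < t k)
  (hrmax0 : 0 < rmax) (hrmax : rmax ^+ 3 = (2 * rmax + 1) ^+ 2)
  (hdelta0 : 0 < delta) (hdelta1 : delta < rmax)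
  (hr2 : (2 <= N)%N -> 0 < step_ratio t 2)
  (hr : forall k : nat, (3 <= k <= N)%N -> 0 < step_ratio t k <= rmax - delta)
  (htheta : forall n k : nat, (1 <= k <= n)%N -> (n <= N)%N ->
     \sum_(k <= j < n.+1) theta n (n - j)%N * bdf2 t j (j - k)%N
       = (n == k)%:R)
  (n : nat) (omega : nat -> R) (hn : (2 <= n <= N)%N) :
  Cr rmax * delta *
    \sum_(2 <= k < n.+1)
       (dstep t k)^-1 * (\sum_(2 <= j < k.+1) theta k (k - j)%N * omega j) ^+ 2
  <= 2 * \sum_(2 <= k < n.+1)
           omega k * \sum_(2 <= j < k.+1) theta k (k - j)%N * omega j.
Proof.
have [s [s0 hRs hs3 hC]] : exists s : R, [/\ 0 < s, rmax = s ^+ 2,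
    s ^+ 3 = 2 * s ^+ 2 + 1 & Cr rmax = s / (1 + s ^+ 2) ^+ 2].
  exists (Num.sqrt rmax).
  have sq : Num.sqrt rmax ^+ 2 = rmax by rewrite sqr_sqrtr // ltW.
  split; first by rewrite sqrtr_gt0.
  - by rewrite sq.
  - by apply: sroot; [rewrite sqrtr_gt0 | rewrite sq].
  - by rewrite /Cr sq.
rewrite hC; subst rmax.
have htau : forall k, (1 <= k <= N)%N -> 0 < dstep t k.
  by move=> k hk; rewrite /dstep subr_gt0; exact: ht.
have hrr : forall k, (2 <= k <= N)%N -> 0 < step_ratio t k.
  move=> k hk; have [->|k3] := eqVneq k 2%N; first by apply: hr2; lia.
  have h3 : (3 <= k <= N)%N by lia.
  by case/andP: (hr k h3).
have htauR : forall k, (2 <= k <= N)%N -> dstep t k = step_ratio t k * dstep t k.-1.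
  move=> k hk; rewrite /step_ratio divfK // gt_eqF // htau //; lia.
have hb0 : forall k, (2 <= k)%N -> bdf2 t k 0 =
    (1 + 2 * step_ratio t k) / (dstep t k * (1 + step_ratio t k)).
  by case=> [|[|k]].
have hb1 : forall k, (2 <= k)%N -> bdf2 t k 1 =
    - (step_ratio t k ^+ 2) / (dstep t k * (1 + step_ratio t k)).
  by case=> [|[|k]].
have hb2 : forall k i, (2 <= i)%N -> bdf2 t k i = 0.
  by case=> [|[|k]] [|[|i]].
have hb0p : forall k, (2 <= k <= N)%N -> 0 < bdf2 t k 0.
  move=> k hk; rewrite hb0; last lia.
  have := hrr k hk; have := htau k ltac:(lia) => h1 h2.
  apply: divr_gt0; first lra.
  by apply: mulr_gt0 => //; lra.
have hb0nz : forall k, (1 <= k <= N)%N -> bdf2 t k 0 != 0.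
  move=> k hk; have [e1|k2] := eqVneq k 1%N.
    by rewrite e1 /bdf2 /= invr_eq0 gt_eqF // htau //; lia.
  by rewrite gt_eqF // hb0p //; lia.
have rec : forall n k, (1 <= k)%N -> (k < n)%N -> (n <= N)%N ->
    theta n (n - k)%N * bdf2 t k 0 + theta n (n - k).-1 * bdf2 t k.+1 1 = 0.
  move=> m k k1 km mN.
  have h := htheta m k ltac:(lia) mN.
  rewrite big_ltn ?ltnS ?(ltnW km) // big_ltn ?ltnS // in h.
  rewrite big_nat_cond big1 in h; last first.
    by move=> j /andP[/andP[hj _] _]; rewrite hb2 ?mulr0 //; lia.
  by rewrite subnn subSnn subnS addr0 gtn_eqF in h.
have diag : forall n, (1 <= n <= N)%N -> theta n 0%N * bdf2 t n 0 = 1.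
  move=> m /andP[m1 mN]; have h := htheta m m.
  rewrite big_nat1 subnn eqxx in h; apply: h => //; by rewrite m1 leqnn.
pose c k := - bdf2 t k 1 / bdf2 t k 0.
have rowrec : forall k i, (3 <= k <= N)%N -> (i < k - 2)%N ->
    theta k i.+1 = c k * theta k.-1 i.
  move=> k i hk; elim: i => [_|i IH hi].
    have := rec k k.-1 ltac:(lia) ltac:(lia) ltac:(lia).
    rewrite (_ : (k - k.-1 = 1)%N); last lia.
    rewrite prednK; last lia.
    move=> /solve_lin -> ; last by apply: hb0nz; lia.
    rewrite (solve_one (hb0nz k ltac:(lia)) (diag k ltac:(lia))).
    rewrite (solve_one (hb0nz k.-1 ltac:(lia)) (diag k.-1 ltac:(lia))).
    rewrite /c /=; field.
    by rewrite !hb0nz //; lia.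
  have hj1 : (1 <= k - 2 - i)%N by lia.
  have e1 := rec k (k - 2 - i)%N hj1 ltac:(lia) ltac:(lia).
  have e2 := rec k.-1 (k - 2 - i)%N hj1 ltac:(lia) ltac:(lia).
  rewrite (_ : (k - (k - 2 - i) = i.+2)%N) in e1; last lia.
  rewrite (_ : (k.-1 - (k - 2 - i) = i.+1)%N) in e2; last lia.
  move/solve_lin: e1 => -> ; last by apply: hb0nz; lia.
  move/solve_lin: e2 => -> ; last by apply: hb0nz; lia.
  rewrite /= IH; last lia.
  by rewrite !mulNr mulrN !mulrA.
pose v m := \sum_(2 <= j < m.+1) theta m (m - j)%N * omega j.
have vrec : forall k, (3 <= k <= N)%N ->
    omega k = bdf2 t k 0 * v k + bdf2 t k 1 * v k.-1.
  move=> k hk.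
  have ev : v k = c k * v k.-1 + theta k 0%N * omega k.
    rewrite /v big_nat_recr /=; last lia.
    rewrite subnn; congr (_ + _).
    rewrite prednK; last lia.
    rewrite mulr_sumr; apply: eq_big_nat => j hj.
    rewrite (_ : (k - j = (k.-1 - j).+1)%N); last lia.
    by rewrite rowrec ?mulrA //; lia.
  rewrite ev (solve_one (hb0nz k ltac:(lia)) (diag k ltac:(lia))) /c; field.
  by rewrite hb0nz //; lia.
have v2 : omega 2%N = bdf2 t 2 0 * v 2%N.
  rewrite /v big_nat1 subnn (solve_one (hb0nz 2%N ltac:(lia)) (diag 2%N ltac:(lia))).
  by rewrite mulrA divff ?mul1r // hb0nz //; lia.
pose K := s ^+ 3 / (1 + s ^+ 2).
pose C := s / (1 + s ^+ 2) ^+ 2 * delta.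
have claim : forall m, (m.+2 <= n)%N ->
    (K - C) * v m.+2 ^+ 2 / dstep t m.+2
    <= 2 * (\sum_(2 <= k < m.+3) omega k * v k)
       - C * (\sum_(2 <= k < m.+3) (dstep t k)^-1 * v k ^+ 2).
  elim=> [h2|m IH hm].
    rewrite !big_nat1 v2 hb0 //.
    have := @baseineq R s _ _ (v 2%N) s0 hs3 (hrr 2%N ltac:(lia)) (htau 2%N ltac:(lia)).
    rewrite /K /C; lra.
  rewrite big_nat_recr /=; last lia.
  rewrite [X in _ <= _ - C * X]big_nat_recr /=; last lia.
  have IH' := IH ltac:(lia).
  rewrite (vrec m.+3 ltac:(lia)) hb0 // hb1 // (htauR m.+3 ltac:(lia)) /=.
  have /andP[r0 r1] := hr m.+3 ltac:(lia).
  have := @stepineq R s delta _ _ (v m.+3) (v m.+2) s0 hs3 hdelta0 r0 r1 (htau m.+2 ltac:(lia)).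
  move: IH'; rewrite /K /C. 
  set r := step_ratio t m.+3. set tau := dstep t m.+2.
  set S1 := \sum_(2 <= k < m.+3) omega k * v k.
  set S2 := \sum_(2 <= k < m.+3) (dstep t k)^-1 * v k ^+ 2.
  lra.
have [n' en] : exists n', n = n'.+2 by exists n.-2; lia.
subst n.
have KC : 0 <= K - C.
  have s2 : 0 < 1 + s ^+ 2 by rewrite ltr_wpDr ?sqr_ge0.
  have -> : K - C = s * (s ^+ 2 * (1 + s ^+ 2) - delta) / (1 + s ^+ 2) ^+ 2.
    by rewrite /K /C; field; rewrite gt_eqF.
  apply: divr_ge0; last exact: sqr_ge0.
  apply: mulr_ge0; first exact: ltW.
  have : 0 <= s ^+ 2 * s ^+ 2 by apply: mulr_ge0; exact: sqr_ge0.
  lra.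
have h0 : 0 <= (K - C) * v n'.+2 ^+ 2 / dstep t n'.+2.
  apply: divr_ge0; first by apply: mulr_ge0 => //; exact: sqr_ge0.
  by apply/ltW/htau; lia.
have cl := claim n' (leqnn _).
suff H : C * \sum_(2 <= k < n'.+3) (dstep t k)^-1 * v k ^+ 2
  <= 2 * \sum_(2 <= k < n'.+3) omega k * v k by exact: H.
lra.
Qed.
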